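(* Let $K$ be a Markov kernel on a finite set $\mathcal{X}$, reversible with respect to a probability measure $\pi$, and assume that for all $f:\mathcal{X}\to\mathbb{R}$ \[ \mathrm{Ent}_\pi(f^2)\le2\sigma^2\int\sum_{y\in\mathcal{X}}(f(x)-f(y))^2K(x,y)\,d\pi(x). \] Then for every $f:\mathcal{X}\to\mathbb{R}$ and every $p\ge2$, \[ \mathrm{Ent}_\pi(|f|^p)\le\sigma^2p^2\int|f|^{p-2}|\partial f|^2d\pi, \qquad \mathrm{Ent}_\pi(|f|^p)\le\sigma^2p^2\|f\|_p^{p-2}\|\partial f\|_p^2, \] where $|\partial f|(x)=\big(\sum_{y\in\mathcal{X}}(f(x)-f(y))^2K(x,y)\big)^{1/2}$.
   Context: $\mathrm{Ent}_\pi(g)=\mathbb{E}_\pi g\log g-\mathbb{E}_\pi g\log\mathbb{E}_\pi g$ for $g\ge0$; $\|g\|_p=(\mathbb{E}_\pi|g|^p)^{1/p}$ and $\|\partial f\|_p=\||\partial f|\|_p$. *)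

(* Defs.v *)
From HB Require Import structures.
From mathcomp Require Import all_boot all_order all_algebra.
From mathcomp Require Import all_classical all_reals all_analysis.
Set Implicit Arguments. Unset Strict Implicit. Unset Printing Implicit Defensive.
Import Order.TTheory GRing.Theory Num.Theory.
Local Open Scope ring_scope.

Section Defs.
Variables (R : realType) (T : finType).

Definition is_prob (pi : T -> R) : Prop :=
  (forall x, 0 <= pi x) /\ \sum_(x : T) pi x = 1.

Definition is_markov_kernel (K : T -> T -> R) : Prop :=
  (forall x y, 0 <= K x y) /\ (forall x, \sum_(y : T) K x y = 1).

Definition reversible (pi : T -> R) (K : T -> T -> R) : Prop :=
  forall x y, pi x * K x y = pi y * K y x.

Definition Epi (pi : T -> R) (g : T -> R) : R := \sum_(x : T) pi x * g x.

(* Ent_pi(g) = E g log g - E g log E g  (ln 0 = 0, so 0 log 0 = 0) *)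
Definition Ent (pi : T -> R) (g : T -> R) : R :=
  Epi pi (fun x => g x * ln (g x)) - Epi pi g * ln (Epi pi g).

Definition grad2 (K : T -> T -> R) (f : T -> R) (x : T) : R :=
  \sum_(y : T) (f x - f y) ^+ 2 * K x y.

Definition gradabs (K : T -> T -> R) (f : T -> R) (x : T) : R :=
  Num.sqrt (grad2 K f x).

Definition Lpnorm (pi : T -> R) (p : R) (g : T -> R) : R :=
  (Epi pi (fun x => `|g x| `^ p)) `^ (p^-1).

End Defs.

(* Main.v *)
Require Import Defs.
From HB Require Import structures.
From mathcomp Require Import all_boot all_order all_algebra.
From mathcomp Require Import all_classical all_reals all_analysis.
From mathcomp Require Import ring lra.
Import Order.TTheory GRing.Theory Num.Theory.
Local Open Scope ring_scope.

Lemma tangent_powR (R : realType) (a b q : R) : 0 <= b -> b <= a -> 1 <= q ->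
  a `^ q - b `^ q <= q * a `^ (q - 1) * (a - b).
Proof.
move=> b0 ba q1.
have a0 : 0 <= a by apply: le_trans ba.
have [<-|q1'] := eqVneq 1 q.
  by rewrite subrr powRr0 !powRr1 // mul1r mul1r.
have qgt1 : 1 < q by rewrite lt_neqAle q1' q1.
have q0 : 0 < q by apply: lt_trans qgt1.
have qm0 : 0 < q - 1 by rewrite subr_gt0.
pose s := q / (q - 1).
have s0 : 0 < s by rewrite divr_gt0.
have qs : q^-1 + s^-1 = 1.
  rewrite /s invf_div; field; by rewrite gt_eqF.
have := conjugate_powR (powR_ge0 a (q - 1)) b0 s0 q0 _.
rewrite addrC => /(_ qs).
rewrite -powRrM (_ : (q - 1) * s = q); last first.
  rewrite /s mulrC -mulrA mulVf ?mulr1 // gt_eqF //.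
rewrite -(mulr_powRB1 a0 q0).
set X := a `^ (q - 1); set B := b `^ q.
rewrite /s invf_div => H.
have X0 : 0 <= X by apply: powR_ge0.
have H2 : q * (X * b) <= q * (a * X * ((q - 1) / q) + B / q).
  by rewrite ler_pM2l.
have E : q * (a * X * ((q - 1) / q) + B / q) = a * X * (q - 1) + B.
  field; by rewrite gt_eqF.
rewrite E in H2.
have -> : q * X * (a - b) = q * (a * X) - q * (X * b) by ring.
lra.
Qed.

Lemma pw_core (R : realType) (u v p : R) : 2 <= p -> `|v| <= `|u| ->
  (`|u| `^ (p / 2) - `|v| `^ (p / 2)) ^+ 2 <=
    p ^+ 2 / 4 * (`|u| `^ (p - 2) + `|v| `^ (p - 2)) * (u - v) ^+ 2.
Proof.
move=> p2 vu.
set a := `|u|; set b := `|v|; set q := p / 2.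
have q1 : 1 <= q by rewrite /q ler_pdivlMr // mul1r.
have b0 : 0 <= b by apply: normr_ge0.
have a0 : 0 <= a by apply: normr_ge0.
have T := @tangent_powR R a b q b0 vu q1.
have D0 : 0 <= a `^ q - b `^ q.
  by rewrite subr_ge0 ge0_ler_powR // ?(le_trans _ q1).
set D := a `^ q - b `^ q in T D0 *.
set X := a `^ (q - 1) in T.
have X0 : 0 <= X by apply: powR_ge0.
have XX : X ^+ 2 = a `^ (p - 2).
  rewrite /X -powR_mulrn // -powRrM; by congr (_ `^ _); rewrite /q; field.
have ab : (a - b) ^+ 2 <= (u - v) ^+ 2.
  rewrite -[(u - v) ^+ 2](real_normK (num_real _)) -[(a - b) ^+ 2](real_normK (num_real _)).
  by rewrite lerXn2r // ?nnegrE // ler_dist_dist.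
have abge : 0 <= a - b by rewrite subr_ge0.
have E1 : D ^+ 2 <= (q * X * (a - b)) ^+ 2.
  apply: lerXn2r; rewrite ?nnegrE //.
  by rewrite mulr_ge0 // mulr_ge0 // (le_trans _ q1).
have bp0 : 0 <= b `^ (p - 2) by apply: powR_ge0.
apply: (le_trans E1).
rewrite exprMn exprMn XX.
have -> : p ^+ 2 / 4 = q ^+ 2 by rewrite /q; field.
have q20 : 0 <= q ^+ 2 by apply: sqr_ge0.
have ap0 : 0 <= a `^ (p - 2) by apply: powR_ge0.
rewrite -mulrA -mulrA ler_wpM2l //.
apply: ler_pM => //; first exact: sqr_ge0.
by rewrite lerDl.
Qed.

Lemma pw (R : realType) (u v p : R) : 2 <= p ->
  (`|u| `^ (p / 2) - `|v| `^ (p / 2)) ^+ 2 <=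
    p ^+ 2 / 4 * (`|u| `^ (p - 2) + `|v| `^ (p - 2)) * (u - v) ^+ 2.
Proof.
move=> p2; have [vu|uv] := leP `|v| `|u|; first exact: pw_core.
have := @pw_core R v u p p2 (ltW uv).
have E1 : (`|v| `^ (p/2) - `|u| `^ (p/2))^+2 = (`|u| `^ (p/2) - `|v| `^ (p/2))^+2
  by rewrite -sqrrN opprB.
have E2 : (v - u)^+2 = (u-v)^+2 by rewrite -sqrrN opprB.
by rewrite E1 E2 (addrC (`|v| `^ (p-2))).
Qed.

Lemma sym_sum (R : realType) (T : finType) (pi : T -> R) (K : T -> T -> R)
  (A f : T -> R) : reversible pi K ->
  \sum_x \sum_y pi x * K x y * (A y * (f x - f y) ^+ 2) =
  \sum_x \sum_y pi x * K x y * (A x * (f x - f y) ^+ 2).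
Proof.
move=> rev; rewrite exchange_big /=; apply: eq_bigr => i _; apply: eq_bigr => j _.
by rewrite -rev -sqrrN opprB.
Qed.

Lemma part1 (R : realType) (T : finType) (pi : T -> R) (K : T -> T -> R)
  (sigma : R) :
  is_prob pi -> is_markov_kernel K -> reversible pi K ->
  (forall f : T -> R,
     Ent pi (fun x => f x ^+ 2) <=
     2 * sigma ^+ 2 * Epi pi (grad2 K f)) ->
  forall (f : T -> R) (p : R), 2 <= p ->
    Ent pi (fun x => `|f x| `^ p) <=
      sigma ^+ 2 * p ^+ 2 *
      Epi pi (fun x => `|f x| `^ (p - 2) * gradabs K f x ^+ 2).
Proof.
move=> [pi0 pi1] [K0 K1] rev H f p p2.
pose g := fun x => `|f x| `^ (p / 2).
have E0 : (fun x => `|f x| `^ p) = (fun x => g x ^+ 2).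
  apply: funext => x; rewrite /g -powR_mulrn ?powR_ge0 // -powRrM.
  by congr (_ `^ _); field.
rewrite E0; apply: (le_trans (H g)).
have s0 : 0 <= sigma ^+ 2 by apply: sqr_ge0.
pose A := fun x => `|f x| `^ (p - 2).
have G2 : forall x, gradabs K f x ^+ 2 = grad2 K f x.
  move=> x; rewrite /gradabs sqr_sqrtr // /grad2 sumr_ge0 // => y _.
  by rewrite mulr_ge0 // sqr_ge0.
under [X in _ <= _ * X]eq_bigr => x _ do rewrite G2.
pose S1 := \sum_x \sum_y pi x * K x y * (A x * (f x - f y) ^+ 2).
have ES1 : Epi pi (fun x => A x * grad2 K f x) = S1.
  rewrite /Epi /S1; apply: eq_bigr => x _; rewrite /grad2 !mulr_sumr.
  by apply: eq_bigr => y _; ring.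
have key : Epi pi (grad2 K g) <= p ^+ 2 / 4 * (S1 + S1).
  have SS : S1 = \sum_x \sum_y pi x * K x y * (A y * (f x - f y) ^+ 2).
    by rewrite /S1 sym_sum.
  rewrite [X in S1 + X]SS /S1 -big_split /= mulr_sumr.
  apply: ler_sum => x _; rewrite /grad2 mulr_sumr -big_split /= mulr_sumr.
  apply: ler_sum => y _.
  have := @pw R (f x) (f y) p p2.
  rewrite -/(g x) -/(g y) -/(A x) -/(A y) => h.
  have pk : 0 <= pi x * K x y by rewrite mulr_ge0.
  rewrite mulrCA.
  apply: (le_trans (ler_wpM2r pk h)).
  by rewrite le_eqVlt; apply/orP; left; apply/eqP; ring.
have -> : \sum_x pi x * (`|f x| `^ (p - 2) * grad2 K f x) = S1 by rewrite -ES1.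
have h2 : 0 <= 2 * sigma ^+ 2 by rewrite mulr_ge0.
apply: (le_trans (ler_wpM2l h2 key)).
by rewrite le_eqVlt; apply/orP; left; apply/eqP; field.
Qed.
Lemma powR_invK (R : realType) (A r : R) : 0 <= A -> 0 < r ->
  (A `^ r^-1) `^ r = A.
Proof.
move=> A0 r0; rewrite -powRrM mulVf ?gt_eqF // powRr1 //.
Qed.

Lemma powR_Vr (R : realType) (a r : R) : 0 <= a -> (a^-1) `^ r = (a `^ r)^-1.
Proof.
move=> a0; rewrite -powR_inv1 // -powRrM mulN1r powRN //.
Qed.

Lemma holder_deg (R : realType) (T : finType) (pi u v : T -> R) (r : R) :
  (forall x, 0 <= pi x) -> (forall x, 0 <= u x) -> 0 < r ->
  \sum_x pi x * u x `^ r = 0 -> \sum_x pi x * (u x * v x) = 0.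
Proof.
move=> pi0 u0 r0 /eqP; rewrite psumr_eq0 => [/allP H|x _]; last first.
  by rewrite mulr_ge0 // powR_ge0.
apply: big1 => x _.
have := H x (mem_index_enum x); rewrite /= mulf_eq0 => /orP [/eqP ->|/eqP h].
  by rewrite mul0r.
by rewrite (powR_eq0_eq0 h) mul0r mulr0.
Qed.

Lemma holder (R : realType) (T : finType) (pi u v : T -> R) (r s : R) :
  (forall x, 0 <= pi x) -> (forall x, 0 <= u x) -> (forall x, 0 <= v x) ->
  0 < r -> 0 < s -> r^-1 + s^-1 = 1 ->
  \sum_x pi x * (u x * v x) <=
  (\sum_x pi x * u x `^ r) `^ r^-1 * (\sum_x pi x * v x `^ s) `^ s^-1.
Proof.
move=> pi0 u0 v0 r0 s0 rs.
set A := \sum_x pi x * u x `^ r; set B := \sum_x pi x * v x `^ s.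
have A0 : 0 <= A by rewrite sumr_ge0 // => x _; rewrite mulr_ge0 // powR_ge0.
have B0 : 0 <= B by rewrite sumr_ge0 // => x _; rewrite mulr_ge0 // powR_ge0.
have R0 : 0 <= A `^ r^-1 * B `^ s^-1 by rewrite mulr_ge0 // powR_ge0.
have [Ae|Ane] := eqVneq A 0.
  by rewrite (@holder_deg R T pi u v r pi0 u0 r0 Ae).
have [Be|Bne] := eqVneq B 0.
  under eq_bigr => x _ do rewrite (mulrC (u x)).
  by rewrite (@holder_deg R T pi v u s pi0 v0 s0 Be).
have Ap : 0 < A by rewrite lt_neqAle eq_sym Ane A0.
have Bp : 0 < B by rewrite lt_neqAle eq_sym Bne B0.
set al := A `^ r^-1; set be := B `^ s^-1.
have alp : 0 < al by apply: powR_gt0.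
have bep : 0 < be by apply: powR_gt0.
have alr : al `^ r = A by apply: powR_invK.
have bes : be `^ s = B by apply: powR_invK.
clearbody al be.
have ali : 0 <= al^-1 by rewrite invr_ge0 (ltW alp).
have bei : 0 <= be^-1 by rewrite invr_ge0 (ltW bep).
have step : forall x, pi x * (u x * v x) <=
    al * be * (pi x * u x `^ r / (r * A) + pi x * v x `^ s / (s * B)).
  move=> x.
  have Y := @conjugate_powR R (u x * al^-1) (v x * be^-1) r s
     (mulr_ge0 (u0 x) ali) (mulr_ge0 (v0 x) bei) r0 s0 rs.
  have e1 : (u x * al^-1) `^ r = u x `^ r / A.
    by rewrite (@powRM R (u x) (al^-1) r (u0 x) ali) (@powR_Vr R al r (ltW alp)) alr.
  have e2 : (v x * be^-1) `^ s = v x `^ s / B.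
    by rewrite (@powRM R (v x) (be^-1) s (v0 x) bei) (@powR_Vr R be s (ltW bep)) bes.
  have c0 : 0 <= pi x * al * be by rewrite mulr_ge0 ?(ltW bep) // mulr_ge0 ?(ltW alp).
  have := ler_wpM2l c0 Y; rewrite e1 e2.
  have -> : pi x * al * be * (u x * al^-1 * (v x * be^-1)) = pi x * (u x * v x).
    by field; rewrite !gt_eqF.
  move=> h; apply: (le_trans h); rewrite le_eqVlt; apply/orP; left; apply/eqP.
  by field; rewrite !gt_eqF.
apply: (le_trans (ler_sum _ (fun x _ => step x))).
rewrite -mulr_sumr big_split /= -!mulr_suml -/A -/B.
have -> : A / (r * A) + B / (s * B) = 1.
  by rewrite -rs; field; rewrite !gt_eqF.
by rewrite mulr1.
Qed.
Lemma part2 (R : realType) (T : finType) (pi : T -> R) (K : T -> T -> R)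
  (f : T -> R) (p : R) : (forall x, 0 <= pi x) -> 2 <= p ->
  Epi pi (fun x => `|f x| `^ (p - 2) * gradabs K f x ^+ 2) <=
  Lpnorm pi p f `^ (p - 2) * Lpnorm pi p (gradabs K f) ^+ 2.
Proof.
move=> pi0 p2.
have G0 : forall x, 0 <= gradabs K f x by move=> x; apply: sqrtr_ge0.
have Gn : forall x, `|gradabs K f x| = gradabs K f x by move=> x; rewrite ger0_norm.
have [p2e|p2n] := eqVneq p 2.
  rewrite p2e subrr powRr0 mul1r /Lpnorm /Epi.
  under eq_bigr => x _ do rewrite powRr0 mul1r.
  under [X in _ <= (X `^ _) ^+ 2]eq_bigr => x _ do rewrite Gn powR_mulrn ?G0 //.
  have S0 : 0 <= \sum_x pi x * gradabs K f x ^+ 2.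
    by apply: sumr_ge0 => x _; rewrite mulr_ge0 // sqr_ge0.
  by rewrite powR12_sqrt // sqr_sqrtr.
have pgt : 2 < p by rewrite lt_neqAle eq_sym p2n p2.
have p0 : 0 < p by apply: lt_trans pgt.
have pm0 : 0 < p - 2 by rewrite subr_gt0.
have r0 : 0 < p / (p - 2) by rewrite divr_gt0.
have s0 : 0 < p / 2 by rewrite divr_gt0.
have rs : (p / (p - 2))^-1 + (p / 2)^-1 = 1.
  by rewrite !invf_div; field; rewrite gt_eqF.
have H := @holder R T pi (fun x => `|f x| `^ (p - 2)) (fun x => gradabs K f x ^+ 2)
  (p / (p - 2)) (p / 2) pi0 (fun x => powR_ge0 _ _) (fun x => sqr_ge0 _) r0 s0 rs.
apply: (le_trans H); rewrite /Lpnorm /Epi.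
have E1 : forall x, (`|f x| `^ (p - 2)) `^ (p / (p - 2)) = `|f x| `^ p.
  by move=> x; rewrite -powRrM; congr (_ `^ _); field; rewrite gt_eqF.
have E2 : forall x, (gradabs K f x ^+ 2) `^ (p / 2) = `|gradabs K f x| `^ p.
  by move=> x; rewrite Gn -(powR_mulrn _ (G0 x)) -powRrM; congr (_ `^ _); field.
rewrite (eq_bigr (fun x => pi x * `|f x| `^ p)); last by move=> x _; rewrite E1.
have -> : \sum_x pi x * (gradabs K f x ^+ 2) `^ (p / 2) = \sum_x pi x * `|gradabs K f x| `^ p.
  by apply: eq_bigr => x _; rewrite E2.
set A := \sum_x pi x * `|f x| `^ p.
set B := \sum_x pi x * `|gradabs K f x| `^ p.
clearbody A B.
have B0 : 0 <= B `^ p^-1 by apply: powR_ge0.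
rewrite -(@powRrM R A) -(@powR_mulrn R _ 2 B0) -(@powRrM R B).
have -> : (p / (p - 2))^-1 = p^-1 * (p - 2) by rewrite invf_div mulrC.
have -> : (p / 2)^-1 = p^-1 * 2%:R by rewrite invf_div mulrC.
by [].
Qed.

Theorem lemma3p2 (R : realType) (T : finType) (pi : T -> R) (K : T -> T -> R)
  (sigma : R) :
  is_prob pi -> is_markov_kernel K -> reversible pi K ->
  (forall f : T -> R,
     Ent pi (fun x => f x ^+ 2) <=
     2 * sigma ^+ 2 * Epi pi (grad2 K f)) ->
  forall (f : T -> R) (p : R), 2 <= p ->
    Ent pi (fun x => `|f x| `^ p) <=
      sigma ^+ 2 * p ^+ 2 *
      Epi pi (fun x => `|f x| `^ (p - 2) * gradabs K f x ^+ 2)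
    /\
    Ent pi (fun x => `|f x| `^ p) <=
      sigma ^+ 2 * p ^+ 2 * Lpnorm pi p f `^ (p - 2) *
      Lpnorm pi p (gradabs K f) ^+ 2.
Proof.
move=> hp hk hr H f p p2.
have P1 := @part1 R T pi K sigma hp hk hr H f p p2.
split => //.
apply: (le_trans P1); rewrite -[X in _ <= X]mulrA.
have c : 0 <= sigma ^+ 2 * p ^+ 2 by rewrite mulr_ge0 // sqr_ge0.
apply: ler_wpM2l => //.
exact: (@part2 R T pi K f p (proj1 hp) p2).
Qed.
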